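(* $E^{ce}_{\mathrm{perm}}$ and $E^{ce}_{\mathrm{set}}$ are computably bireducible: $E^{ce}_{\mathrm{perm}}\leq_cE^{ce}_{\mathrm{set}}$ and $E^{ce}_{\mathrm{set}}\leq_cE^{ce}_{\mathrm{perm}}$.
   Context: $W_e$ is the $e$-th c.e. set; $A^{[n]}=\{x:\langle x,n\rangle\in A\}$ is the $n$-th column of $A\subseteq\omega$ under the standard pairing function. $i\,E^{ce}_{\mathrm{perm}}\,j\iff$ there is a permutation $p$ of $\omega$ with $W_i^{[n]}=W_j^{[p(n)]}$ for all $n$. $i\,E^{ce}_{\mathrm{set}}\,j\iff\{W_i^{[n]}:n\in\omega\}=\{W_j^{[n]}:n\in\omega\}$. For equivalence relations $E,F$ on $\omega$, $E\leq_cF$ means there is a total computable $g$ with $x\,E\,y\iff g(x)\,F\,g(y)$ for all $x,y$. *)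

(* Defs.v *)
From Stdlib Require Import Arith Lia.

Definition pair (x y : nat) : nat := (x + y) * (x + y + 1) / 2 + y.

(* Programs: unary partial recursive functions (arguments coded by pairing). *)
Inductive code : Type :=
| CZero
| CSucc
| CId
| CPi1
| CPi2
| CPair (f g : code)
| CComp (f g : code)
| CRec (f g : code)
| CMu (f : code).

Inductive eval : code -> nat -> nat -> Prop :=
| ev_zero x : eval CZero x 0
| ev_succ x : eval CSucc x (S x)
| ev_id x : eval CId x x
| ev_pi1 x y : eval CPi1 (pair x y) x
| ev_pi2 x y : eval CPi2 (pair x y) y
| ev_pair f g x a b : eval f x a -> eval g x b -> eval (CPair f g) x (pair a b)
| ev_comp f g x a b : eval g x a -> eval f a b -> eval (CComp f g) x b
| ev_rec0 f g x r : eval f x r -> eval (CRec f g) (pair x 0) r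
| ev_recS f g x n r s :
    eval (CRec f g) (pair x n) r -> eval g (pair x (pair n r)) s ->
    eval (CRec f g) (pair x (S n)) s
| ev_mu f x n :
    eval f (pair x n) 0 ->
    (forall m, m < n -> exists k, k <> 0 /\ eval f (pair x m) k) ->
    eval (CMu f) x n.

(* Goedel numbering of programs (injective; numbers outside the range
   are indices of the empty partial function). *)
Fixpoint enc (c : code) : nat :=
  match c with
  | CZero => pair 0 0
  | CSucc => pair 1 0
  | CId => pair 2 0
  | CPi1 => pair 3 0
  | CPi2 => pair 4 0
  | CPair f g => pair 5 (pair (enc f) (enc g))
  | CComp f g => pair 6 (pair (enc f) (enc g))
  | CRec f g => pair 7 (pair (enc f) (enc g))
  | CMu f => pair 8 (enc f)
  end.

Definition W (e x : nat) : Prop := exists c y, enc c = e /\ eval c x y.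

Definition column (A : nat -> Prop) (n : nat) : nat -> Prop :=
  fun x => A (pair x n).

Definition set_eq (A B : nat -> Prop) : Prop := forall x, A x <-> B x.

Definition is_permutation (p : nat -> nat) : Prop :=
  (forall a b, p a = p b -> a = b) /\ (forall b, exists a, p a = b).

Definition Eperm (i j : nat) : Prop :=
  exists p, is_permutation p /\
    forall n, set_eq (column (W i) n) (column (W j) (p n)).

Definition Eset (i j : nat) : Prop :=
  (forall n, exists m, set_eq (column (W i) n) (column (W j) m)) /\
  (forall m, exists n, set_eq (column (W i) n) (column (W j) m)).

Definition computable (g : nat -> nat) : Prop :=
  exists c, forall x, eval c x (g x).

Definition creducible (E F : nat -> nat -> Prop) : Prop :=
  exists g, computable g /\ forall x y, E x y <-> F (g x) (g y).

(* Main.v *)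
Require Import Defs.
From Stdlib Require Import Arith Lia ClassicalEpsilon.

Definition T (s : nat) : nat := s * (s + 1) / 2.

Lemma pair_T x y : pair x y = T (x + y) + y.
Proof. reflexivity. Qed.

Lemma T_S s : T (S s) = T s + S s.
Proof.
  unfold T.
  replace (S s * (S s + 1)) with (s * (s + 1) + (S s) * 2) by lia.
  rewrite Nat.div_add by lia. reflexivity.
Qed.

Lemma T_mono a b : a <= b -> T a <= T b.
Proof.
  induction 1; auto. rewrite T_S. lia.
Qed.

Arguments pair : simpl never.

Lemma pair_inj x y x' y' : pair x y = pair x' y' -> x = x' /\ y = y'.
Proof.
  rewrite !pair_T. intro H.
  assert (x + y = x' + y').
  { destruct (Nat.lt_trichotomy (x+y) (x'+y')) as [h|[h|h]]; auto; exfalso.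
    - assert (T (S (x + y)) <= T (x' + y')) by (apply T_mono; lia).
      rewrite T_S in H0. lia.
    - assert (T (S (x' + y')) <= T (x + y)) by (apply T_mono; lia).
      rewrite T_S in H0. lia. }
  rewrite H0 in H. lia.
Qed.

Lemma pair_surj0 z : exists p : nat * nat, pair (fst p) (snd p) = z.
Proof.
  induction z as [|z [[x y] IH]].
  - exists (0,0). reflexivity.
  - simpl in IH. destruct x as [|x].
    + exists (S y, 0). simpl. rewrite !pair_T in *. replace (S y + 0) with (S (0 + y)) by lia. rewrite T_S. lia.
    + exists (x, S y). simpl. rewrite !pair_T in *.
      replace (x + S y) with (S x + y) by lia. lia.
Qed.

Definition unp z := proj1_sig (constructive_indefinite_description _ (pair_surj0 z)).
Definition fst' z := fst (unp z).
Definition snd' z := snd (unp z).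

Lemma pair_fs z : pair (fst' z) (snd' z) = z.
Proof. unfold fst', snd', unp. destruct (constructive_indefinite_description _ _). auto. Qed.

Lemma fst_pair a b : fst' (pair a b) = a.
Proof. pose proof (pair_fs (pair a b)). apply pair_inj in H. tauto. Qed.
Lemma snd_pair a b : snd' (pair a b) = b.
Proof. pose proof (pair_fs (pair a b)). apply pair_inj in H. tauto. Qed.

Lemma pair_surj z : exists a b, z = pair a b.
Proof. exists (fst' z), (snd' z). symmetry. apply pair_fs. Qed.

Lemma pair_ge_r a b : b <= pair a b.
Proof. rewrite pair_T. lia. Qed.

Lemma enc_inj c1 c2 : enc c1 = enc c2 -> c1 = c2.
Proof.
  revert c2; induction c1; destruct c2; simpl; intro H;
  apply pair_inj in H; destruct H as [H1 H2]; try discriminate; auto;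
  try (apply pair_inj in H2; destruct H2 as [H2 H3]);
  f_equal; auto.
Qed.

Lemma enc_comp c a b : enc c = pair 6 (pair a b) -> exists f g, c = CComp f g /\ enc f = a /\ enc g = b.
Proof.
  destruct c; simpl; intro H; apply pair_inj in H; destruct H as [H1 H2]; try discriminate.
  apply pair_inj in H2. exists c1, c2. tauto.
Qed.

Lemma enc_cpair c a b : enc c = pair 5 (pair a b) -> exists f g, c = CPair f g /\ enc f = a /\ enc g = b.
Proof.
  destruct c; simpl; intro H; apply pair_inj in H; destruct H as [H1 H2]; try discriminate.
  apply pair_inj in H2. exists c1, c2. tauto.
Qed.

Lemma inv_zero x y : eval CZero x y -> y = 0.
Proof. intro H; inversion H; auto. Qed.
Lemma inv_succ x y : eval CSucc x y -> y = S x.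
Proof. intro H; inversion H; auto. Qed.
Lemma inv_id x y : eval CId x y -> y = x.
Proof. intro H; inversion H; auto. Qed.
Lemma inv_pi1 x y : eval CPi1 x y -> y = fst' x.
Proof. intro H; inversion H; subst. rewrite fst_pair; auto. Qed.
Lemma inv_pi2 x y : eval CPi2 x y -> y = snd' x.
Proof. intro H; inversion H; subst. rewrite snd_pair; auto. Qed.
Lemma inv_pair f g x y : eval (CPair f g) x y -> exists a b, y = pair a b /\ eval f x a /\ eval g x b.
Proof. intro H; inversion H; subst; eauto. Qed.
Lemma inv_comp f g x y : eval (CComp f g) x y -> exists a, eval g x a /\ eval f a y.
Proof. intro H; inversion H; subst; eauto. Qed.
Lemma inv_rec f g z y : eval (CRec f g) z y ->
  (exists x, z = pair x 0 /\ eval f x y) \/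
  (exists x n r, z = pair x (S n) /\ eval (CRec f g) (pair x n) r /\ eval g (pair x (pair n r)) y).
Proof. intro H; inversion H; subst; eauto 10. Qed.
Lemma inv_mu f x n : eval (CMu f) x n ->
  eval f (pair x n) 0 /\ (forall m, m < n -> exists k, k <> 0 /\ eval f (pair x m) k).
Proof. intro H; inversion H; subst; eauto. Qed.

Lemma eval_det c : forall x y1 y2, eval c x y1 -> eval c x y2 -> y1 = y2.
Proof.
  induction c; intros x y1 y2 H1 H2.
  - apply inv_zero in H1; apply inv_zero in H2; congruence.
  - apply inv_succ in H1; apply inv_succ in H2; congruence.
  - apply inv_id in H1; apply inv_id in H2; congruence.
  - apply inv_pi1 in H1; apply inv_pi1 in H2; congruence.
  - apply inv_pi2 in H1; apply inv_pi2 in H2; congruence.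
  - apply inv_pair in H1 as (a1&b1&->&A1&B1). apply inv_pair in H2 as (a2&b2&->&A2&B2).
    f_equal; eauto.
  - apply inv_comp in H1 as (a1&A1&B1). apply inv_comp in H2 as (a2&A2&B2).
    assert (a1 = a2) by eauto. subst. eauto.
  - assert (Hr : forall n x y1 y2, eval (CRec c1 c2) (pair x n) y1 -> eval (CRec c1 c2) (pair x n) y2 -> y1 = y2).
    { induction n; intros x0 z1 z2 E1 E2.
      - apply inv_rec in E1 as [(x1&e1&F1)|(x1&n1&r1&e1&_&_)]; apply pair_inj in e1; [|lia].
        apply inv_rec in E2 as [(x2&e2&F2)|(x2&n2&r2&e2&_&_)]; apply pair_inj in e2; [|lia].
        destruct e1, e2; subst. eauto.
      - apply inv_rec in E1 as [(x1&e1&F1)|(x1&n1&r1&e1&R1&G1)]; apply pair_inj in e1; [lia|].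
        apply inv_rec in E2 as [(x2&e2&F2)|(x2&n2&r2&e2&R2&G2)]; apply pair_inj in e2; [lia|].
        destruct e1 as [<- e1], e2 as [<- e2]. injection e1 as ->. injection e2 as ->.
        assert (r1 = r2) by eauto. subst. eauto. }
    destruct (pair_surj x) as (a&b&->). eauto.
  - apply inv_mu in H1 as [Z1 L1]. apply inv_mu in H2 as [Z2 L2].
    destruct (Nat.lt_trichotomy y1 y2) as [h|[h|h]]; auto; exfalso.
    + destruct (L2 _ h) as (k&kn&Ek). apply kn. symmetry; eauto.
    + destruct (L1 _ h) as (k&kn&Ek). apply kn. symmetry; eauto.
Qed.

Definition computes c (F : nat -> nat) := forall x, eval c x (F x).

Lemma c_ext c F F' : computes c F -> (forall x, F x = F' x) -> computes c F'.
Proof. intros H E x. rewrite <- E. apply H. Qed.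
Lemma c_zero : computes CZero (fun _ => 0).
Proof. intro; constructor. Qed.
Lemma c_succ : computes CSucc S.
Proof. intro; constructor. Qed.
Lemma c_id : computes CId (fun x => x).
Proof. intro; constructor. Qed.
Lemma c_pi1 : computes CPi1 fst'.
Proof. intro x. destruct (pair_surj x) as (a&b&->). rewrite fst_pair. constructor. Qed.
Lemma c_pi2 : computes CPi2 snd'.
Proof. intro x. destruct (pair_surj x) as (a&b&->). rewrite snd_pair. constructor. Qed.
Lemma c_pair f g F G : computes f F -> computes g G -> computes (CPair f g) (fun x => pair (F x) (G x)).
Proof. intros A B x. constructor; auto. Qed.
Lemma c_comp f g F G : computes f F -> computes g G -> computes (CComp f g) (fun x => F (G x)).
Proof. intros A B x. econstructor; eauto. Qed.

Fixpoint Rf (F G : nat -> nat) x n :=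
  match n with 0 => F x | S n => G (pair x (pair n (Rf F G x n))) end.

Lemma c_rec f g F G : computes f F -> computes g G -> computes (CRec f g) (fun z => Rf F G (fst' z) (snd' z)).
Proof.
  intros A B z. destruct (pair_surj z) as (x&n&->). rewrite fst_pair, snd_pair.
  induction n; simpl; econstructor; eauto.
Qed.

Fixpoint constc n := match n with 0 => CZero | S n => CComp CSucc (constc n) end.
Lemma c_const n : computes (constc n) (fun _ => n).
Proof. induction n; intro x; simpl; econstructor; eauto. constructor. Qed.

Definition bin O f g := CComp O (CPair f g).
Lemma c_bin O op f g F G : computes O (fun z => op (fst' z) (snd' z)) -> computes f F -> computes g G ->
  computes (bin O f g) (fun x => op (F x) (G x)).
Proof.
  intros HO A B. eapply c_ext. apply c_comp; [apply HO| apply c_pair; eauto].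
  intro; simpl. rewrite fst_pair, snd_pair. auto.
Qed.

Definition ADD := CRec CId (CComp CSucc (CComp CPi2 CPi2)).
Lemma c_ADD : computes ADD (fun z => fst' z + snd' z).
Proof.
  eapply c_ext. apply c_rec. apply c_id. apply c_comp. apply c_succ. apply c_comp; [apply c_pi2|apply c_pi2].
  intro z. simpl. generalize (fst' z) (snd' z). intros x n. induction n; simpl; auto.
  rewrite !snd_pair, IHn. lia.
Qed.

Definition PRED := CComp (CRec CZero (CComp CPi1 CPi2)) (CPair CZero CId).
Lemma c_PRED : computes PRED pred.
Proof.
  eapply c_ext. apply c_comp. apply c_rec. apply c_zero. apply c_comp; [apply c_pi1|apply c_pi2].
  apply c_pair; [apply c_zero|apply c_id].
  intro z. simpl. rewrite fst_pair, snd_pair. destruct z; simpl; auto. rewrite snd_pair, fst_pair. auto.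
Qed.

Definition SUB := CRec CId (CComp PRED (CComp CPi2 CPi2)).
Lemma c_SUB : computes SUB (fun z => fst' z - snd' z).
Proof.
  eapply c_ext. apply c_rec. apply c_id. apply c_comp. apply c_PRED. apply c_comp; [apply c_pi2|apply c_pi2].
  intro z. simpl. generalize (fst' z) (snd' z). intros x n. induction n; simpl; try lia.
  rewrite !snd_pair, IHn. lia.
Qed.

Definition IFZ := CRec CPi1 (CComp CPi2 CPi1).
Lemma c_IFZ : computes IFZ (fun z => match snd' z with 0 => fst' (fst' z) | S _ => snd' (fst' z) end).
Proof.
  eapply c_ext. apply c_rec. apply c_pi1. apply c_comp; [apply c_pi2|apply c_pi1].
  intro z. simpl. generalize (fst' z) (snd' z). intros x n. destruct n; simpl; auto.
  rewrite fst_pair. auto.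
Qed.

Definition pos m t := fst' (Nat.iter t snd' m).

Definition ITER := CRec CId (CComp CPi2 (CComp CPi2 CPi2)).
Definition POS := CComp CPi1 ITER.
Lemma c_POS : computes POS (fun z => pos (fst' z) (snd' z)).
Proof.
  eapply c_ext. apply c_comp. apply c_pi1. apply c_rec. apply c_id. apply c_comp; [apply c_pi2|].
  apply c_comp; [apply c_pi2|apply c_pi2].
  intro z. unfold pos. simpl. f_equal. generalize (fst' z) (snd' z). intros x n. induction n; simpl; auto.
  rewrite !snd_pair, IHn. auto.
Qed.

Lemma c_add f g F G : computes f F -> computes g G -> computes (bin ADD f g) (fun x => F x + G x).
Proof. intros; apply c_bin; auto; apply c_ADD. Qed.
Lemma c_sub f g F G : computes f F -> computes g G -> computes (bin SUB f g) (fun x => F x - G x).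
Proof. intros; apply c_bin; auto; apply c_SUB. Qed.
Lemma c_pos f g F G : computes f F -> computes g G -> computes (bin POS f g) (fun x => pos (F x) (G x)).
Proof. intros; apply c_bin; auto; apply c_POS. Qed.
Lemma c_ifz a b c A B C : computes a A -> computes b B -> computes c C ->
  computes (CComp IFZ (CPair (CPair a b) c)) (fun x => match C x with 0 => A x | S _ => B x end).
Proof.
  intros. eapply c_ext. apply c_comp. apply c_IFZ. apply c_pair; [apply c_pair|]; eauto.
  intro; simpl. rewrite !fst_pair, !snd_pair. auto.
Qed.

Lemma enc_CPair f g : enc (CPair f g) = pair 5 (pair (enc f) (enc g)).
Proof. reflexivity. Qed.
Lemma enc_CComp f g : enc (CComp f g) = pair 6 (pair (enc f) (enc g)).
Proof. reflexivity. Qed.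

(* projections for z = pair (pair (pair s u) y) (pair k (pair m q)) *)
Definition Ps := CComp CPi1 (CComp CPi1 CPi1).
Definition Pu := CComp CPi2 (CComp CPi1 CPi1).
Definition Py := CComp CPi2 CPi1.
Definition Pk := CComp CPi1 CPi2.
Definition Pm := CComp CPi1 (CComp CPi2 CPi2).
Definition Pq := CComp CPi2 (CComp CPi2 CPi2).
Definition DIST a b := bin ADD (bin SUB a b) (bin SUB b a).
Definition dist a b := (a - b) + (b - a).

Definition G1c := bin ADD (bin ADD (bin SUB (CComp CSucc Ps) Pk) (bin SUB (CComp CSucc Pu) Pk))
   (bin SUB (bin SUB (constc 1) (DIST (bin POS Pm Ps) (bin POS Pm Pu))) (bin SUB (constc 1) (DIST Ps Pu))).
Definition H1c := CPair Py (CComp IFZ (CPair (CPair (bin POS Pm Ps) Pq) (DIST Ps Pu))).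

Definition sv z := fst' (fst' (fst' z)).
Definition uv z := snd' (fst' (fst' z)).
Definition yv z := snd' (fst' z).
Definition kv z := fst' (snd' z).
Definition mv z := fst' (snd' (snd' z)).
Definition qv z := snd' (snd' (snd' z)).

Definition G1f z := (S (sv z) - kv z) + (S (uv z) - kv z) +
  ((1 - dist (pos (mv z) (sv z)) (pos (mv z) (uv z))) - (1 - dist (sv z) (uv z))).
Definition h1f z := pair (yv z) (match dist (sv z) (uv z) with 0 => pos (mv z) (sv z) | S _ => qv z end).

Ltac crush := repeat first [ apply c_add | apply c_sub | apply c_pos | apply c_ifz | apply c_const
   | apply c_pair | apply c_comp | apply c_pi1 | apply c_pi2 | apply c_succ | apply c_id | apply c_zero ].

Lemma c_G1 : computes G1c G1f.
Proof. eapply c_ext; [unfold G1c, DIST, Ps, Pu, Pk, Pm; crush|]. intro; reflexivity. Qed.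
Lemma c_H1 : computes H1c h1f.
Proof. eapply c_ext; [unfold H1c, DIST, Ps, Pu, Py, Pm, Pq; crush|]. intro; reflexivity. Qed.

Definition MU1 := CMu (CComp G1c CPi1).
Definition g1f x := pair 5 (pair (pair 6 (pair x (enc H1c))) (enc MU1)).

Lemma g1_computable : computable g1f.
Proof.
  exists (CPair (constc 5) (CPair (CPair (constc 6) (CPair CId (constc (enc H1c)))) (constc (enc MU1)))).
  eapply c_ext. apply c_pair. apply c_const. apply c_pair. apply c_pair. apply c_const. apply c_pair. apply c_id.
  apply (c_const (enc H1c)). apply (c_const (enc MU1)). intro; reflexivity.
Qed.

Lemma W_g1 i z : W (g1f i) z <-> G1f z = 0 /\ W i (h1f z).
Proof.
  split.
  - intros (c&y&E&Ev). unfold g1f in E. apply enc_cpair in E as (f&g&->&Ef&Eg).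
    apply enc_comp in Ef as (f1&f2&->&E1&E2). apply enc_inj in E2. apply enc_inj in Eg. subst.
    apply inv_pair in Ev as (a&b&_&A&B). apply inv_comp in A as (a'&A1&A2).
    rewrite (eval_det _ _ _ _ A1 (c_H1 z)) in A2.
    apply inv_mu in B as [B _]. pose proof (c_comp _ _ _ _ c_G1 c_pi1 (pair z b)) as B'.
    simpl in B'. rewrite (eval_det _ _ _ _ B B'), fst_pair. split; auto. exists f1, a; auto.
  - intros [G (c&y&<-&Ev)]. exists (CPair (CComp c H1c) MU1), (pair y 0). split.
    + rewrite enc_CPair, enc_CComp. unfold g1f. reflexivity.
    + constructor. econstructor; [apply c_H1|exact Ev].
      constructor. 2: intros; lia.
      pose proof (c_comp _ _ _ _ c_G1 c_pi1 (pair z 0)) as B'. simpl in B'. rewrite fst_pair, G in B'. exact B'.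
Qed.

Definition H2c := CPair CPi1 (CComp CPi1 CPi2).
Definition h2f z := pair (fst' z) (fst' (snd' z)).
Lemma c_H2 : computes H2c h2f.
Proof. eapply c_ext; [unfold H2c; crush|]. intro; reflexivity. Qed.
Definition g2f x := pair 6 (pair x (enc H2c)).
Lemma g2_computable : computable g2f.
Proof. exists (CPair (constc 6) (CPair CId (constc (enc H2c)))). eapply c_ext. apply c_pair. apply c_const. apply c_pair. apply c_id. apply (c_const (enc H2c)). intro; reflexivity. Qed.

Lemma W_g2 i z : W (g2f i) z <-> W i (h2f z).
Proof.
  split.
  - intros (c&y&E&Ev). unfold g2f in E. apply enc_comp in E as (f1&f2&->&E1&E2). apply enc_inj in E2. subst.
    apply inv_comp in Ev as (a'&A1&A2). rewrite (eval_det _ _ _ _ A1 (c_H2 z)) in A2. exists f1, y; auto.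
  - intros (c&y&<-&Ev). exists (CComp c H2c), y. split; [rewrite enc_CComp; reflexivity|]. econstructor; [apply c_H2|exact Ev].
Qed.

Lemma col2 i M : set_eq (column (W (g2f i)) M) (column (W i) (fst' M)).
Proof. intro x. unfold column. rewrite W_g2. unfold h2f. rewrite fst_pair, snd_pair. tauto. Qed.

Lemma col1 i k m q s u y : column (W (g1f i)) (pair k (pair m q)) (pair (pair s u) y) <->
  ((s < k /\ u < k /\ (s = u \/ pos m s <> pos m u)) /\ W i (pair y (if Nat.eqb s u then pos m s else q))).
Proof.
  unfold column. rewrite W_g1. unfold G1f, h1f, sv, uv, yv, kv, mv, qv. repeat (first [rewrite fst_pair | rewrite snd_pair]).
  unfold dist. destruct (Nat.eqb_spec s u).
  - subst. replace (u - u + (u - u)) with 0 by lia. 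
    split; intros [A B]; split; auto; lia.
  - replace (s - u + (u - s)) with (S (s - u + (u - s) - 1)) by lia.
    destruct (Nat.eq_dec (pos m s) (pos m u)) as [e|e].
    + rewrite e. split; intros [A B]; [lia|]. exfalso; destruct A as (_&_&[?|?]); auto.
    + split; intros [A B]; split; auto; lia.
Qed.

Fixpoint cnt (P : nat -> Prop) n :=
  match n with 0 => 0 | S n => cnt P n + (if excluded_middle_informative (P n) then 1 else 0) end.

Definition hasrank (P : nat -> Prop) r := exists y, P y /\ cnt P y = r.

Lemma cnt_ext P Q n : (forall x, P x <-> Q x) -> cnt P n = cnt Q n.
Proof.
  intro H; induction n; simpl; auto. rewrite IHn.
  destruct (excluded_middle_informative (P n)), (excluded_middle_informative (Q n)); firstorder.
Qed.

Lemma cnt_in P n : P n -> cnt P (S n) = S (cnt P n).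
Proof. intro H; simpl. destruct (excluded_middle_informative (P n)); [lia|tauto]. Qed.
Lemma cnt_out P n : ~ P n -> cnt P (S n) = cnt P n.
Proof. intro H; simpl. destruct (excluded_middle_informative (P n)); [tauto|lia]. Qed.
Lemma cnt_mono P n m : n <= m -> cnt P n <= cnt P m.
Proof. induction 1; auto. simpl. lia. Qed.

Lemma rank_inj P a b : P a -> P b -> cnt P a = cnt P b -> a = b.
Proof.
  intros Ha Hb E. destruct (Nat.lt_trichotomy a b) as [h|[h|h]]; auto; exfalso.
  - pose proof (cnt_mono P (S a) b h). rewrite cnt_in in H by auto. lia.
  - pose proof (cnt_mono P (S b) a h). rewrite cnt_in in H by auto. lia.
Qed.

Lemma below P N r : r < cnt P N -> hasrank P r.
Proof.
  induction N; simpl; [lia|]. intro H.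
  destruct (excluded_middle_informative (P N)).
  - destruct (Nat.eq_dec r (cnt P N)); [exists N; auto|]. apply IHN; lia.
  - apply IHN; lia.
Qed.

Lemma hasrank_down P r t : hasrank P r -> t <= r -> hasrank P t.
Proof.
  intros (y&Py&E) h. apply (below P (S y)). rewrite cnt_in by auto. lia.
Qed.

Lemma cnt_lower P : forall N r g, (forall t, t <= r -> P (g t) /\ g t < N) ->
  (forall t1 t2, t1 <= r -> t2 <= r -> g t1 = g t2 -> t1 = t2) -> r < cnt P N.
Proof.
  induction N; intros r g H I.
  - destruct (H 0) as [_ h]; lia.
  - destruct (classic (exists t0, t0 <= r /\ g t0 = N)) as [(t0&h0&e0)|no].
    + assert (PN : P N) by (rewrite <- e0; apply H; auto). rewrite cnt_in by auto.
      destruct r as [|r]; [lia|].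
      set (g' := fun t => if t <? t0 then g t else g (S t)).
      assert (r < cnt P N); [|lia].
      apply (IHN r g').
      * intros t ht. unfold g'. destruct (Nat.ltb_spec t t0).
        -- destruct (H t) as [A B]; [lia|]. split; auto.
           assert (g t <> N) by (intro e; rewrite <- e0 in e; apply I in e; lia). lia.
        -- destruct (H (S t)) as [A B]; [lia|]. split; auto.
           assert (g (S t) <> N) by (intro e; rewrite <- e0 in e; apply I in e; lia). lia.
      * intros t1 t2 h1 h2. unfold g'.
        destruct (Nat.ltb_spec t1 t0), (Nat.ltb_spec t2 t0); intro e; apply I in e; lia.
    + assert (r < cnt P N); [|simpl; lia].
      apply (IHN r g); auto. intros t ht. destruct (H t ht) as [A B]. split; auto.
      assert (g t <> N) by (intro e; apply no; eauto). lia.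
Qed.

Fixpoint sumf (g : nat -> nat) r := match r with 0 => g 0 | S r => sumf g r + g (S r) end.
Lemma sumf_ge g r t : t <= r -> g t <= sumf g r.
Proof. induction r; intro h; simpl. replace t with 0 by lia; auto. destruct (Nat.eq_dec t (S r)); [subst; lia|]. specialize (IHr ltac:(lia)); lia. Qed.

Lemma distinct_hasrank P r g : (forall t, t <= r -> P (g t)) ->
  (forall t1 t2, t1 <= r -> t2 <= r -> g t1 = g t2 -> t1 = t2) -> hasrank P r.
Proof.
  intros H I. apply (below P (S (sumf g r))). apply cnt_lower with g; auto.
  intros t ht. split; auto. pose proof (sumf_ge g r t ht). lia.
Qed.

Lemma hasrank_seq P r : hasrank P r -> exists f, forall t, t <= r -> P (f t) /\ cnt P (f t) = t.
Proof.
  intro H.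
  assert (Hex : forall t, exists y, t <= r -> P y /\ cnt P y = t).
  { intro t. destruct (le_lt_dec t r) as [h|h].
    - destruct (hasrank_down P r t H h) as (y&A&B). exists y; auto.
    - exists 0; intro; lia. }
  exists (fun t => proj1_sig (constructive_indefinite_description _ (Hex t))).
  intros t ht. destruct (constructive_indefinite_description _ (Hex t)); simpl; auto.
Qed.

Lemma se_refl A : set_eq A A.
Proof. intro; tauto. Qed.
Lemma se_sym A B : set_eq A B -> set_eq B A.
Proof. intros H x; specialize (H x); tauto. Qed.
Lemma se_trans A B C : set_eq A B -> set_eq B C -> set_eq A C.
Proof. intros H1 H2 x; specialize (H1 x); specialize (H2 x); tauto. Qed.

Lemma Eset_sym a b : Eset a b -> Eset b a.
Proof.
  intros [H1 H2]. split.
  - intro n. destruct (H2 n) as [m Hm]. exists m. apply se_sym; auto.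
  - intro m. destruct (H1 m) as [n Hn]. exists n. apply se_sym; auto.
Qed.

Lemma CL (ki kj : nat -> nat -> Prop) :
  (forall A r, hasrank (fun x => set_eq (ki x) A) r <-> hasrank (fun y => set_eq (kj y) A) r) ->
  exists p, is_permutation p /\ forall x, set_eq (ki x) (kj (p x)).
Proof.
  intro H.
  assert (Hex : forall x, exists y, set_eq (kj y) (ki x) /\
     cnt (fun y => set_eq (kj y) (ki x)) y = cnt (fun x' => set_eq (ki x') (ki x)) x).
  { intro x. apply H. exists x. split; auto. apply se_refl. }
  set (p := fun x => proj1_sig (constructive_indefinite_description _ (Hex x))).
  assert (Hp : forall x, set_eq (kj (p x)) (ki x) /\
     cnt (fun y => set_eq (kj y) (ki x)) (p x) = cnt (fun x' => set_eq (ki x') (ki x)) x).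
  { intro x. unfold p. destruct (constructive_indefinite_description _ (Hex x)); simpl; auto. }
  assert (ext : forall (k : nat -> nat -> Prop) A B, set_eq A B -> forall n,
     cnt (fun x => set_eq (k x) A) n = cnt (fun x => set_eq (k x) B) n).
  { intros k A B E n. apply cnt_ext. intro x. split; intro; eauto using se_trans, se_sym. }
  exists p. split; [split|].
  - intros a b E. destruct (Hp a) as [A1 A2]. destruct (Hp b) as [B1 B2].
    rewrite E in A1, A2.
    assert (Eab : set_eq (ki b) (ki a)) by eauto using se_trans, se_sym.
    rewrite (ext kj _ _ Eab), (ext ki _ _ Eab) in B2.
    apply (rank_inj (fun x' => set_eq (ki x') (ki a))); auto. apply se_refl. congruence.
  - intro y. set (A := kj y).
    destruct (proj2 (H A (cnt (fun y => set_eq (kj y) A) y))) as (x&Hx&Ex).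
    { exists y. split; auto. apply se_refl. }
    exists x. destruct (Hp x) as [B1 B2].
    rewrite (ext kj _ _ Hx), (ext ki _ _ Hx) in B2.
    apply (rank_inj (fun y => set_eq (kj y) A)); auto.
    + eauto using se_trans.
    + apply se_refl.
    + congruence.
  - intro x. apply se_sym. apply Hp.
Qed.

Lemma enc_seq k : forall f, exists m, forall t, t < k -> pos m t = f t.
Proof.
  induction k; intro f.
  - exists 0; intros; lia.
  - destruct (IHk (fun t => f (S t))) as [m' Hm']. exists (pair (f 0) m').
    intros [|t] ht; unfold pos.
    + simpl. apply fst_pair.
    + rewrite Nat.iter_succ_r, snd_pair. apply Hm'. lia.
Qed.

Lemma dec_e e : exists s u y, e = pair (pair s u) y.
Proof. destruct (pair_surj e) as (a&y&->). destruct (pair_surj a) as (s&u&->). eauto. Qed.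
Lemma dec_M M : exists k m q, M = pair k (pair m q).
Proof. destruct (pair_surj M) as (k&b&->). destruct (pair_surj b) as (m&q&->). eauto. Qed.

Lemma red2 i j : Eset i j <-> Eperm (g2f i) (g2f j).
Proof.
  split.
  - intro HE. apply CL.
    assert (one : forall i j, Eset i j -> forall A r,
      hasrank (fun x => set_eq (column (W (g2f i)) x) A) r ->
      hasrank (fun x => set_eq (column (W (g2f j)) x) A) r).
    { clear. intros i j [E1 _] A r (x&Hx&_).
      destruct (E1 (fst' x)) as [m Hm].
      apply distinct_hasrank with (g := fun t => pair m t).
      - intros t _. eapply se_trans. apply col2. rewrite fst_pair.
        eapply se_trans. apply se_sym; exact Hm. eapply se_trans. apply se_sym, col2. exact Hx.
      - intros t1 t2 _ _ e. apply pair_inj in e. tauto. }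
    intros A r. split; apply one; auto. apply Eset_sym; auto.
  - intros (p&[Pinj Psurj]&Hp). split.
    + intro n. exists (fst' (p (pair n 0))).
      eapply se_trans. 2: apply col2. eapply se_trans. 2: apply Hp.
      eapply se_trans. 2: apply se_sym, col2. rewrite fst_pair. apply se_refl.
    + intro m. destruct (Psurj (pair m 0)) as [a Ha]. exists (fst' a).
      eapply se_trans. apply se_sym, col2. eapply se_trans. apply Hp. rewrite Ha.
      eapply se_trans. apply col2. rewrite fst_pair. apply se_refl.
Qed.

Lemma b1 i j p : (forall n, set_eq (column (W i) n) (column (W j) (p n))) ->
  (forall a b, p a = p b -> a = b) ->
  forall M, exists M', set_eq (column (W (g1f i)) M) (column (W (g1f j)) M').
Proof.
  intros Hp Pinj M. destruct (dec_M M) as (k&m&q&->).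
  destruct (enc_seq k (fun t => p (pos m t))) as [m' Hm'].
  exists (pair k (pair m' (p q))). intro e. destruct (dec_e e) as (s&u&y&->).
  rewrite !col1.
  destruct (classic (s < k /\ u < k)) as [[hs hu]|no]; [|split; intros [(?&?&?) _]; exfalso; auto].
  rewrite (Hm' s hs), (Hm' u hu).
  assert (D : (s = u \/ pos m s <> pos m u) <-> (s = u \/ p (pos m s) <> p (pos m u))).
  { split; intros [h|h]; auto; right; intro e; apply h; auto; congruence. }
  assert (Wq : W i (pair y (if s =? u then pos m s else q)) <-> W j (pair y (if s =? u then p (pos m s) else p q))).
  { destruct (s =? u); apply Hp. }
  tauto.
Qed.

Lemma a1 i j : Eset (g1f i) (g1f j) -> forall A r,
  hasrank (fun x => set_eq (column (W i) x) A) r -> hasrank (fun x => set_eq (column (W j) x) A) r.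
Proof.
  intros [E1 E2] A r Hr.
  destruct (classic (exists q y, W i (pair y q))) as [(q&y0&Hq)|Hno].
  - destruct (hasrank_seq _ _ Hr) as [f Hf].
    set (F := fun t => if t <=? r then f t else S (sumf f r)).
    destruct (enc_seq (S (S r)) F) as [m Hm].
    destruct (E1 (pair (S (S r)) (pair m q))) as [M' HM'].
    destruct (dec_M M') as (k'&m'&q'&->).
    assert (FI : forall t1 t2, t1 <= S r -> t2 <= S r -> F t1 = F t2 -> t1 = t2).
    { unfold F; intros t1 t2 h1 h2 e.
      destruct (Nat.leb_spec t1 r), (Nat.leb_spec t2 r).
      - destruct (Hf t1) as [_ c1]; auto. destruct (Hf t2) as [_ c2]; auto. congruence.
      - pose proof (sumf_ge f r t1 ltac:(lia)). lia.
      - pose proof (sumf_ge f r t2 ltac:(lia)). lia.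
      - lia. }
    assert (Hmark : forall s u, s <= S r -> u <= S r -> s <> u -> s < k' /\ u < k' /\ pos m' s <> pos m' u).
    { intros s u hs hu ne. pose proof (proj1 (HM' (pair (pair s u) y0))) as H.
      rewrite !col1 in H. destruct H as [(A1&A2&A3) _].
      - split; [split; [lia|split; [lia|]]|].
        + right. rewrite (Hm s), (Hm u) by lia. intro e; apply ne, FI; auto.
        + destruct (Nat.eqb_spec s u); [contradiction|exact Hq].
      - split; auto. split; auto. destruct A3; [contradiction|auto]. }
    apply distinct_hasrank with (g := pos m').
    + intros t ht y. pose proof (HM' (pair (pair t t) y)) as H. rewrite !col1, Nat.eqb_refl in H.
      destruct (Hmark t (S r)) as [hk _]; try lia.
      rewrite (Hm t) in H by lia. unfold F in H. destruct (Nat.leb_spec t r); [|lia].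
      destruct (Hf t ht) as [Hft _]. specialize (Hft y). unfold column in *.
      assert (t < S (S r)) by lia. tauto.
    + intros t1 t2 h1 h2 e. destruct (Nat.eq_dec t1 t2); auto.
      destruct (Hmark t1 t2) as (_&_&c); lia.
  -
    destruct Hr as (x&Hx&_).
    assert (Aempty : forall y, ~ A y). { intros y Ay. apply (Hx y) in Ay. apply Hno; eauto. }
    assert (Jempty : forall y n, ~ W j (pair y n)).
    { intros y n Hj. destruct (enc_seq 1 (fun _ => n)) as [m0 Hm0].
      destruct (E2 (pair 1 (pair m0 0))) as [M HM].
      destruct (dec_M M) as (k&m&q&->).
      pose proof (proj2 (HM (pair (pair 0 0) y))) as H. rewrite !col1 in H. simpl in H.
      destruct H as [_ H].
      - split; [lia|]. rewrite Hm0 by lia. exact Hj.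
      - apply Hno; eauto. }
    apply distinct_hasrank with (g := fun t => t).
    + intros t _ y. unfold column. split; intro h; exfalso; [eapply Jempty|eapply Aempty]; eauto.
    + auto.
Qed.

Lemma red1 i j : Eperm i j <-> Eset (g1f i) (g1f j).
Proof.
  split.
  - intros (p&[Pinj Psurj]&Hp).
    assert (Hq : forall b, exists a, p a = b) by auto.
    set (q := fun b => proj1_sig (constructive_indefinite_description _ (Hq b))).
    assert (Hpq : forall b, p (q b) = b).
    { intro b. unfold q. destruct (constructive_indefinite_description _ (Hq b)); auto. }
    split.
    + apply (b1 i j p); auto.
    + intro M. destruct (b1 j i q) with (M := M) as [M' HM'].
      * intro n. eapply se_trans. 2: apply se_sym, Hp. rewrite Hpq. apply se_refl.
      * intros a b e. rewrite <- (Hpq a), <- (Hpq b), e. auto.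
      * exists M'. apply se_sym; auto.
  - intro HE. apply CL. intros A r. split; apply a1; auto. apply Eset_sym; auto.
Qed.

Theorem theorem2p3 : creducible Eperm Eset /\ creducible Eset Eperm.
Proof.
  split.
  - exists g1f. split; [apply g1_computable|]. apply red1.
  - exists g2f. split; [apply g2_computable|]. apply red2.
Qed.
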